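(* Let $P \in S$ have degree $n$ in $x$, where $n$ is a prime number. Let $p_n$ be the leading coefficient of $P$ and $\rho = \deg_y(p_n)$, and let $s = \deg_y(\sigma(y))$. If $\sum_{i=0}^{n-1} s^i$ does not divide $\rho$, then $C_S(P) = K[P]$.
   Context: Standing conventions: $K$ is a field, $R = K[y]$, $\sigma$ is a $K$-algebra endomorphism of $R$ with $\deg_y(\sigma(y)) > 1$, and $\delta$ is a $K$-linear $\sigma$-derivation of $R$ ($\delta(ab) = \sigma(a)\delta(b) + \delta(a)b$). $S = R[x;\sigma,\delta]$ is the Ore extension (polynomials $\sum r_i x^i$, $r_i\in R$, with $xr = \sigma(r)x + \delta(r)$). Degree of an element of $S$ means degree in $x$; its leading coefficient is the coefficient in $K[y]$ of the highest power of $x$. $C_S(P)$ is the centralizer of $P$ in $S$, and $K[P] = \{\sum_i c_i P^i : c_i \in K\}$. *)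

(* Defs.v *)
From HB Require Import structures.
From mathcomp Require Import all_boot all_order all_algebra.
Set Implicit Arguments. Unset Strict Implicit. Unset Printing Implicit Defensive.
Import GRing.Theory.
Local Open Scope ring_scope.

(* The Ore extension S = R[x; sigma, delta] with R = K[y] = {poly K}.
   An element sum_i r_i x^i of S is represented by the polynomial
   f : {poly {poly K}} with f`_i = r_i (coefficient of x^i, written on the left).
   Only the additive structure of {poly {poly K}} is used; multiplication of S
   is the Ore product ore_mul defined below. *)

(* left multiplication by x:  x * (sum_k a_k x^k) = sum_k (sigma a_k x^{k+1} + delta a_k x^k) *)
Definition ore_mulx (K : fieldType) (sigma delta : {poly K} -> {poly K})
  (f : {poly {poly K}}) : {poly {poly K}} :=
  map_poly sigma f * 'X + map_poly delta f.

Definition ore_mul (K : fieldType) (sigma delta : {poly K} -> {poly K})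
  (f g : {poly {poly K}}) : {poly {poly K}} :=
  \sum_(0 <= i < size f) (f`_i)%:P * iter i (ore_mulx sigma delta) g.

Definition ore_pow (K : fieldType) (sigma delta : {poly K} -> {poly K})
  (P : {poly {poly K}}) (i : nat) : {poly {poly K}} :=
  iter i (ore_mul sigma delta P) 1.

Definition ore_centralizer (K : fieldType) (sigma delta : {poly K} -> {poly K})
  (P : {poly {poly K}}) : {poly {poly K}} -> Prop :=
  fun Q => ore_mul sigma delta P Q = ore_mul sigma delta Q P.

Definition ore_KP (K : fieldType) (sigma delta : {poly K} -> {poly K})
  (P : {poly {poly K}}) : {poly {poly K}} -> Prop :=
  fun Q => exists c : seq K,
    Q = \sum_(0 <= i < size c) (c`_i)%:P%:P * ore_pow sigma delta P i.

(* Main.v *)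
Require Import Defs.
From HB Require Import structures.
From mathcomp Require Import all_boot all_order all_algebra.
From mathcomp Require Import zify ring.
Import GRing.Theory.
Lemma numth (s n rho d m' t : nat) : 1 < s -> 0 < n ->
  rho + d * s ^ n = d + rho * s ^ m' -> m'.+1 = t * n -> \sum_(i < n) s ^ i %| rho.
Proof.
move=> s1 n0 E Et.
set T := (s ^ n).-1.
have sn : s ^ n = T.+1 by rewrite prednK // expn_gt0 ltnW.
have e1 : s ^ n = 1 %[mod T] by rewrite sn -add1n modnDr.
have e2 : forall x, s ^ (x * n) = 1 %[mod T].
  by move=> x; rewrite mulnC expnM -modnXm e1 modnXm exp1n.
have e3 : rho = rho * s ^ m' %[mod T].
  apply/eqP; rewrite -(eqn_modDl d) addnC -E sn.
  have -> : rho + d * T.+1 = d * T + (rho + d) by rewrite mulnS; lia.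
  by rewrite modnMDl.
have e4 : rho * s ^ m'.+1 = rho %[mod T] by rewrite Et -modnMmr e2 modnMmr muln1.
have e5 : rho * s = rho * s ^ m'.+1 %[mod T].
  by rewrite (expnSr s m') mulnA -[(rho * s ^ m' * s) %% T]modnMml -e3 modnMml.
have e6 := etrans e5 e4.
move/eqP: e6; rewrite eqn_mod_dvd ?leq_pmulr ?(ltnW s1) //.
rewrite /T predn_exp -[X in _ - X]muln1 -mulnBr subn1 mulnC dvdn_pmul2r //.
by rewrite -ltnS prednK // ltnW.
Qed.

Local Open Scope ring_scope.



Lemma cancel_t a b t : (1 < t)%N -> (a * t + b = b * t + a)%N -> a = b.
Proof.
move=> t1 E.
have [H|H] := leqP a b.
  move: E; rewrite -(subnKC H); move: (b - a)%N => k E.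
  have : (k * t = k)%N by lia.
  by case: k {E} => // k; nia.
move: E; rewrite -(subnKC (ltnW H)); move: (a - b)%N => k E.
have : (k * t = k)%N by lia.
by case: k {E} => // k; nia.
Qed.

Section Ore.
Variable K : fieldType.
Implicit Types f g h A B Q R : {poly {poly K}}.
Variable sigma : {rmorphism {poly K} -> {poly K}}.
Hypothesis sigmaK : forall c : K, sigma c%:P = c%:P.
Variable delta : {poly K} -> {poly K}.
Hypothesis delta_lin : forall (c : K) (a b : {poly K}), delta (c *: a + b) = c *: delta a + delta b.
Hypothesis delta_der : forall a b : {poly K}, delta (a * b) = sigma a * delta b + delta a * b.

Local Notation L := (ore_mulx sigma delta).
Local Notation mul := (ore_mul sigma delta).

Lemma delta0 : delta 0 = 0.
Proof.
have := delta_lin 1 0 0; rewrite scale1r addr0 scale1r => H.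
by apply: (@addrI _ (delta 0)); rewrite addr0 -H.
Qed.

Lemma deltaD a b : delta (a + b) = delta a + delta b.
Proof. by have := delta_lin 1 a b; rewrite !scale1r. Qed.

Lemma deltaZ (c : K) a : delta (c *: a) = c *: delta a.
Proof. by rewrite -[c *: a]addr0 delta_lin delta0 addr0. Qed.

Lemma deltaN a : delta (- a) = - delta a.
Proof. by rewrite -scaleN1r deltaZ scaleN1r. Qed.

Lemma deltaB a b : delta (a - b) = delta a - delta b.
Proof. by rewrite deltaD deltaN. Qed.

Lemma delta1 : delta 1 = 0.
Proof.
have := delta_der 1 1; rewrite mulr1 rmorph1 mul1r mulr1 => H.
by apply: (@addrI _ (delta 1)); rewrite addr0 -H.
Qed.

Lemma coefL f i : (L f)`_i = (if i is j.+1 then sigma f`_j else 0) + delta f`_i.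
Proof.
rewrite /ore_mulx coefD coefMX (coef_map_id0 _ _ delta0).
by case: i => [|j] //=; rewrite coef_map.
Qed.

Lemma LD f g : L (f + g) = L f + L g.
Proof.
apply/polyP => i; rewrite coefD !coefL !coefD deltaD.
case: i => [|j]; first by rewrite !add0r.
by rewrite coefD rmorphD /= addrACA.
Qed.

Lemma L0 : L 0 = 0.
Proof. by apply/polyP => i; rewrite coefL coef0 delta0; case: i => [|j]; rewrite ?coef0 ?rmorph0 addr0. Qed.

Lemma LB f g : L (f - g) = L f - L g.
Proof.
apply/polyP => i; rewrite coefB !coefL !coefB deltaB.
case: i => [|j]; first by rewrite !add0r.
by rewrite coefB rmorphB /= addrACA opprD.
Qed.

Lemma LCM (a : {poly K}) g : L (a%:P * g) = (sigma a)%:P * L g + (delta a)%:P * g.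
Proof.
apply/polyP => i; rewrite coefL [RHS]coefD (coefCM a) (coefCM (sigma a)) (coefCM (delta a)) coefL delta_der.
case: i => [|j].
  by rewrite !add0r.
by rewrite (coefCM a g j) rmorphM /= mulrDr addrA.
Qed.

Lemma LC (c : K) g : L (c%:P%:P * g) = c%:P%:P * L g.
rewrite LCM sigmaK.
Proof.
have -> : delta c%:P = 0 by rewrite -[c%:P]mulr1 mul_polyC deltaZ delta1 scaler0.
by rewrite polyC0 mul0r addr0.
Qed.


Lemma iterLD i f g : iter i L (f + g) = iter i L f + iter i L g.
Proof. by elim: i => //= i ->; rewrite LD. Qed.
Lemma iterLB i f g : iter i L (f - g) = iter i L f - iter i L g.
Proof. by elim: i => //= i ->; rewrite LB. Qed.
Lemma iterL0 i : iter i L 0 = 0.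
Proof. by elim: i => //= i ->; rewrite L0. Qed.
Lemma iterLC i c g : iter i L (c%:P%:P * g) = c%:P%:P * iter i L g.
Proof. by elim: i => //= i ->; rewrite LC. Qed.

Lemma oreE N f g : (size f <= N)%N ->
  mul f g = \sum_(0 <= i < N) (f`_i)%:P * iter i L g.
Proof.
move=> H; rewrite /ore_mul (big_cat_nat (leq0n (size f)) H) /=.
rewrite [X in _ = _ + X]big_nat_cond [X in _ = _ + X]big1 ?addr0 // => i /andP[/andP[Hi _] _].
by rewrite nth_default // polyC0 mul0r.
Qed.

Lemma omul0l h : mul 0 h = 0.
Proof. by rewrite /ore_mul size_poly0 big_geq. Qed.

Lemma omulDl f g h : mul (f + g) h = mul f h + mul g h.
Proof.
set N := maxn (size f) (size g).
rewrite (oreE N _ _ (size_polyD f g)) (oreE N _ _ (leq_maxl _ _)) (oreE N _ _ (leq_maxr _ _)).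
by rewrite -big_split; apply: eq_bigr => i _; rewrite coefD polyCD mulrDl.
Qed.

Lemma omulBl f g h : mul (f - g) h = mul f h - mul g h.
Proof.
set N := maxn (size f) (size g).
have H : (size (f - g)%R <= N)%N by apply: (leq_trans (size_polyD _ _)); rewrite size_polyN.
rewrite (oreE N _ _ H) (oreE N _ _ (leq_maxl _ _)) (oreE N _ _ (leq_maxr _ _)).
by rewrite -sumrB; apply: eq_bigr => i _; rewrite coefB polyCB mulrBl.
Qed.

Lemma omulCMl (a : {poly K}) f h : mul (a%:P * f) h = a%:P * mul f h.
Proof.
have H : (size (a%:P * f)%R <= size f)%N.
  by apply/leq_sizeP => j Hj; rewrite (coefCM a) nth_default ?mulr0.
rewrite (oreE _ _ _ H) /ore_mul mulr_sumr; apply: eq_bigr => i _.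
by rewrite (coefCM a) polyCM mulrA.
Qed.

Lemma omulDr f g h : mul f (g + h) = mul f g + mul f h.
Proof. by rewrite /ore_mul -big_split; apply: eq_bigr => i _; rewrite iterLD mulrDr. Qed.
Lemma omulBr f g h : mul f (g - h) = mul f g - mul f h.
Proof. by rewrite /ore_mul -sumrB; apply: eq_bigr => i _; rewrite iterLB mulrBr. Qed.
Lemma omul0r f : mul f 0 = 0.
Proof. by rewrite /ore_mul big1 // => i _; rewrite iterL0 mulr0. Qed.
Lemma omulCr f c g : mul f (c%:P%:P * g) = c%:P%:P * mul f g.
Proof. by rewrite /ore_mul mulr_sumr; apply: eq_bigr => i _; rewrite iterLC mulrCA. Qed.

Lemma omulsuml N (F : nat -> {poly {poly K}}) h :
  mul (\sum_(0 <= i < N) F i) h = \sum_(0 <= i < N) mul (F i) h.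
Proof.
elim: N => [|N IH]; first by rewrite !big_geq // omul0l.
by rewrite !big_nat_recr //= omulDl IH.
Qed.

Lemma omulsumr N (F : nat -> {poly {poly K}}) f :
  mul f (\sum_(0 <= i < N) F i) = \sum_(0 <= i < N) mul f (F i).
Proof.
elim: N => [|N IH]; first by rewrite !big_geq // omul0r.
by rewrite !big_nat_recr //= omulDr IH.
Qed.

Lemma Lsum N (F : nat -> {poly {poly K}}) :
  L (\sum_(0 <= i < N) F i) = \sum_(0 <= i < N) L (F i).
Proof.
elim: N => [|N IH]; first by rewrite !big_geq // L0.
by rewrite !big_nat_recr //= LD IH.
Qed.

Lemma omulLl g h : mul (L g) h = L (mul g h).
Proof.
set N := size g.
have H : (size (L g) <= N.+1)%N.
  apply/leq_sizeP => j Hj; rewrite coefL !nth_default ?delta0 ?addr0 //; last by apply: ltnW.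
  by case: j Hj => // j Hj; rewrite nth_default ?rmorph0.
rewrite (oreE _ _ _ H) /ore_mul Lsum.
rewrite (eq_bigr (fun i => (if i is j.+1 then sigma g`_j else 0)%:P * iter i L h
   + (delta g`_i)%:P * iter i L h)); last by move=> i _; rewrite coefL polyCD mulrDl.
rewrite big_split /= big_nat_recl // big_nat_recr //= polyC0 !mul0r add0r.
rewrite [g`_N]nth_default // delta0 polyC0 mul0r addr0.
rewrite -big_split /=; apply: eq_bigr => i _.
by rewrite LCM.
Qed.

Lemma omuliterLl i g h : mul (iter i L g) h = iter i L (mul g h).
Proof. by elim: i => //= i <-; rewrite omulLl. Qed.

Lemma omulA f g h : mul f (mul g h) = mul (mul f g) h.
Proof.
rewrite [mul f g]/ore_mul omulsuml {1}/ore_mul; apply: eq_bigr => i _.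
by rewrite omulCMl omuliterLl.
Qed.


Lemma omul1l g : mul 1 g = g.
Proof. by rewrite /ore_mul size_poly1 big_nat1 /= coef1 /= polyC1 mul1r. Qed.

Lemma LXn i : L ('X^i : {poly {poly K}}) = 'X^(i.+1).
Proof.
rewrite /ore_mulx map_polyXn -exprSr.
have -> : map_poly delta 'X^i = 0; last by rewrite addr0.
apply/polyP => j; rewrite (coef_map_id0 _ _ delta0) coefXn coef0.
by case: (_ == _); rewrite /= ?delta0 ?delta1.
Qed.

Lemma iterL1 i : iter i L 1 = ('X^i : {poly {poly K}}).
Proof. by elim: i => [|i /= ->]; rewrite ?expr0 // LXn. Qed.

Lemma omul1r f : mul f 1 = f.
Proof.
rewrite /ore_mul -[RHS]coefK poly_def big_mkord; apply: eq_bigr => i _.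
by rewrite iterL1 mul_polyC.
Qed.


Lemma gtsize (R : nzSemiRingType) (p : {poly R}) i : p`_i != 0 -> (i < size p)%N.
Proof. by apply: contraR; rewrite -leqNgt => H; rewrite nth_default. Qed.

Lemma lastcoef_neq0 (R : nzSemiRingType) (p : {poly R}) m : size p = m.+1 -> p`_m != 0.
Proof.
move=> H; have : lead_coef p != 0 by rewrite lead_coef_eq0 -size_poly_eq0 H.
by rewrite lead_coefE H.
Qed.

Lemma size_eqS (R : nzSemiRingType) (p : {poly R}) m :
  p`_m != 0 -> (forall j, (m < j)%N -> p`_j = 0) -> size p = m.+1.
Proof.
move=> H1 H2; apply/eqP; rewrite eqn_leq gtsize // andbT.
by apply/leq_sizeP.
Qed.

Hypothesis sigma_deg : (2 < size (sigma 'X))%N.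
Local Notation s := (size (sigma 'X)).-1.

Lemma sigma_comp b : sigma b = b \Po sigma 'X.
Proof.
elim/poly_ind: b => [|b c IH]; first by rewrite rmorph0 comp_poly0.
by rewrite rmorphD rmorphM /= IH sigmaK comp_polyD comp_polyM comp_polyX comp_polyC.
Qed.

Lemma size_sigma b : b != 0 -> size (sigma b) = ((size b).-1 * s).+1.
Proof.
move=> bn0; have q1 : (1 < size (sigma 'X))%N by apply: ltnW.
have qn0 : sigma 'X != 0 by rewrite -size_poly_eq0 -lt0n ltnW.
rewrite sigma_comp -size_comp_poly prednK // size_poly_gt0.
by rewrite -lead_coef_eq0 lead_coef_comp // mulf_neq0 ?expf_neq0 ?lead_coef_eq0.
Qed.

Lemma sigma_neq0 b : b != 0 -> sigma b != 0.
Proof. by move=> bn0; rewrite -size_poly_eq0 size_sigma. Qed.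

Lemma sigmaN_neq0 j b : b != 0 -> iter j sigma b != 0.
Proof. by move=> bn0; elim: j => //= j IH; apply: sigma_neq0. Qed.

Lemma size_sigmaN j b : b != 0 -> size (iter j sigma b) = ((size b).-1 * s ^ j).+1.
Proof.
move=> bn0; elim: j => [|j IH]; first by rewrite muln1 prednK // size_poly_gt0.
rewrite /= size_sigma ?sigmaN_neq0 // IH /= expnS. by rewrite -mulnA [(_ ^ j * _)%N]mulnC.
Qed.

Lemma sizeL g k : size g = k.+1 -> size (L g) = k.+2 /\ (L g)`_k.+1 = sigma g`_k.
Proof.
move=> Hg.
have Hc : (L g)`_k.+1 = sigma g`_k by rewrite coefL [g`_k.+1]nth_default ?Hg // delta0 addr0.
split=> //; apply: size_eqS; first by rewrite Hc sigma_neq0 // lastcoef_neq0.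
case=> // j Hj; rewrite coefL !nth_default ?Hg ?rmorph0 ?delta0 ?addr0 //.
by apply: ltnW.
Qed.

Lemma sizeLi i g k : size g = k.+1 ->
  size (iter i L g) = (k + i).+1 /\ (iter i L g)`_(k + i) = iter i sigma g`_k.
Proof.
move=> Hg; elim: i => [|i [IH1 IH2]]; first by rewrite addn0.
have [H1 H2] := sizeL _ _ IH1.
by rewrite /= addnS H1 H2 IH2.
Qed.

Lemma coefM_high f g m k j : size f = m.+1 -> size g = k.+1 -> (m + k <= j)%N ->
  (mul f g)`_j = f`_m * (iter m L g)`_j.
Proof.
move=> Hf Hg Hj; rewrite /ore_mul Hf coef_sum big_nat_recr //= (coefCM (f`_m)).
rewrite big_nat_cond big1 ?add0r // => i /andP[/andP[_ Hi] _].
have [S _] := sizeLi i _ _ Hg.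
rewrite (coefCM (f`_i)) [X in _ * X]nth_default ?mulr0 // S.
by apply: leq_trans Hj; rewrite addnC ltn_add2r.
Qed.

Lemma sizeM f g m k : size f = m.+1 -> size g = k.+1 ->
  size (mul f g) = (m + k).+1 /\ (mul f g)`_(m + k) = f`_m * iter m sigma g`_k.
Proof.
move=> Hf Hg; have [S1 S2] := sizeLi m _ _ Hg.
have Hc : (mul f g)`_(m + k) = f`_m * iter m sigma g`_k.
  by rewrite (coefM_high _ _ _ _ _ Hf Hg) // addnC S2.
split=> //; apply: size_eqS.
  by rewrite Hc mulf_neq0 ?sigmaN_neq0 ?lastcoef_neq0.
move=> j Hj; rewrite (coefM_high _ _ _ _ _ Hf Hg) ?(ltnW Hj) // [X in _ * X]nth_default ?mulr0 //.
by rewrite S1 addnC.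
Qed.


Lemma iterS_B j a b : iter j sigma (a - b) = iter j sigma a - iter j sigma b.
Proof. by elim: j => //= j ->; rewrite rmorphB. Qed.
Lemma iterS_M j a b : iter j sigma (a * b) = iter j sigma a * iter j sigma b.
Proof. by elim: j => //= j ->; rewrite rmorphM. Qed.
Lemma iterS_C j c : iter j sigma c%:P = c%:P.
Proof. by elim: j => //= j ->; rewrite sigmaK. Qed.

Lemma degeq j (u v : {poly K}) : (0 < j)%N -> u != 0 -> v != 0 ->
  iter j sigma u * v = iter j sigma v * u -> size u = size v.
Proof.
move=> j0 un0 vn0 E.
have : size (iter j sigma u * v) = size (iter j sigma v * u) by rewrite E.
rewrite !size_mul ?sigmaN_neq0 // !size_sigmaN //.
have t2 : (2 <= s ^ j)%N.
  have s2 : (2 <= s)%N by move: sigma_deg; lia.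
  apply: (leq_trans s2); rewrite -{1}(expn1 s) leq_pexp2l //; lia.
have pu : (0 < size u)%N by rewrite size_poly_gt0.
have pv : (0 < size v)%N by rewrite size_poly_gt0.
move: t2; generalize (s ^ j)%N => t t2.
rewrite -(prednK pu) -(prednK pv) /=.
move=> H.
have H2 : ((size u).-1 * t + (size v).-1 = (size v).-1 * t + (size u).-1)%N by move: H; rewrite !addnS => -[].
by rewrite (cancel_t _ _ _ t2 H2).
Qed.

Lemma uniq_lead j (q1 q2 : {poly K}) : (0 < j)%N -> q1 != 0 -> q2 != 0 ->
  iter j sigma q1 * q2 = iter j sigma q2 * q1 -> exists c : K, q2 = c%:P * q1.
Proof.
move=> j0 n1 n2 E.
have S := degeq _ _ _ j0 n1 n2 E.
case Hd : (size q1) => [|d]; first by move/eqP: Hd; rewrite size_poly_eq0 (negbTE n1).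
set c := q2`_d / q1`_d.
have l1 : q1`_d != 0 by apply: lastcoef_neq0.
exists c; apply/eqP; rewrite -subr_eq0; apply/eqP.
set w := q2 - c%:P * q1.
have Sw : (size w <= d)%N.
  apply/leq_sizeP => i; rewrite leq_eqVlt => /orP[/eqP <-|Hi].
    by rewrite /w coefB (coefCM c) /c divfK // subrr.
  by rewrite /w coefB (coefCM c) !nth_default ?mulr0 ?subr0 // -?S ?Hd.
apply/eqP; apply: contraLR Sw => wn0; rewrite -ltnNge.
have Ew : iter j sigma q1 * w = iter j sigma w * q1.
  rewrite /w iterS_B iterS_M iterS_C.
  have -> : iter j sigma q1 * (q2 - c%:P * q1) = iter j sigma q1 * q2 - c%:P * (iter j sigma q1 * q1) by ring.
  by rewrite E; ring.
by rewrite -(degeq _ _ _ j0 n1 wn0 Ew) Hd.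
Qed.


Variable P : {poly {poly K}}.
Variable n : nat.
Hypothesis n_prime : prime n.
Hypothesis P_deg : size P = n.+1.
Hypothesis Hnd : ~~ ((\sum_(i < n) s ^ i)%N %| (size (lead_coef P)).-1)%N.

Local Notation pw := (ore_pow sigma delta).

Lemma CmulAB A B : mul P A = mul A P -> mul P B = mul B P ->
  mul P (mul A B) = mul (mul A B) P.
Proof. by move=> HA HB; rewrite omulA HA -omulA HB omulA. Qed.

Lemma Cpow A k : mul P A = mul A P -> mul P (pw A k) = mul (pw A k) P.
Proof.
move=> HA; elim: k => [|k IH]; first by rewrite /ore_pow /= omul1r omul1l.
by rewrite /ore_pow /=; apply: CmulAB.
Qed.

Lemma size_pow A m k : size A = m.+1 -> size (pw A k) = (k * m).+1.
Proof.
move=> HA; elim: k => [|k IH]; first by rewrite /ore_pow /= size_poly1.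
have [H _] := sizeM _ _ _ _ HA IH.
by rewrite /ore_pow /= -/(pw A k) H mulSn.
Qed.

Lemma lead_rel Q m : size Q = m.+1 -> mul P Q = mul Q P ->
  P`_n * iter n sigma Q`_m = Q`_m * iter m sigma P`_n.
Proof.
move=> HQ E.
have [_ h1] := sizeM _ _ _ _ P_deg HQ; have [_ h2] := sizeM _ _ _ _ HQ P_deg.
by rewrite -h1 -h2 addnC E.
Qed.

Lemma deg_rel Q m : size Q = m.+1 -> mul P Q = mul Q P ->
  addn (size P`_n).-1 (muln (size Q`_m).-1 (expn s n)) =
  addn (size Q`_m).-1 (muln (size P`_n).-1 (expn s m)).
Proof.
move=> HQ E.
have pn0 : P`_n != 0 by apply: lastcoef_neq0.
have qn0 : Q`_m != 0 by apply: lastcoef_neq0.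
have : size (P`_n * iter n sigma Q`_m) = size (Q`_m * iter m sigma P`_n) by rewrite lead_rel.
rewrite !size_mul ?sigmaN_neq0 // !size_sigmaN //.
have pp : (0 < size (P`_n)%R)%N by rewrite size_poly_gt0.
have pq : (0 < size (Q`_m)%R)%N by rewrite size_poly_gt0.
rewrite -(prednK pp) -(prednK pq) /= !addnS => -[].
by [].
Qed.

Lemma deg_div Q m : size Q = m.+1 -> mul P Q = mul Q P -> (n %| m)%N.
Proof.
move=> HQ E; case: (boolP (n %| m)%N) => // nd.
have n0 : (0 < n)%N by apply: prime_gt0.
have cop : coprime n m by rewrite prime_coprime.
have [a _ Ha] := Bezoutl m n0.
move: Ha; rewrite (eqP cop) => Ha.
have Hs := size_pow _ _ a HQ.
have := deg_rel _ _ Hs (Cpow _ a E).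
set d' := (size _).-1 => Eq.
have s1 : (1 < s)%N by move: sigma_deg; lia.
have Et : (a * m).+1 = ((1 + a * m) %/ n * n)%N by rewrite divnK // add1n.
have := numth _ _ _ _ _ _ s1 n0 Eq Et.
by move: Hnd; rewrite lead_coefE P_deg /= => /negP.
Qed.

Definition KPp Q := exists N (f : nat -> K),
  Q = \sum_(0 <= i < N) (f i)%:P%:P * pw P i.

Lemma KPp0 : KPp 0.
Proof. by exists 0%N, (fun=> 0); rewrite big_geq. Qed.

Lemma pad (F : nat -> {poly {poly K}}) N1 N' : (N1 <= N')%N ->
  \sum_(0 <= i < N') (if (i < N1)%N then F i else 0) = \sum_(0 <= i < N1) F i.
Proof.
move=> H; rewrite (big_cat_nat (leq0n N1) H) /= [X in _ + X]big_nat_cond.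
rewrite [X in _ + X]big1 ?addr0; last by move=> i /andP[/andP[Hi _] _]; rewrite ltnNge Hi.
by apply: eq_big_nat => i /andP[_ ->].
Qed.

Lemma single (F : nat -> {poly {poly K}}) k N' : (k < N')%N ->
  \sum_(0 <= i < N') (if i == k then F i else 0) = F k.
Proof.
move=> H; rewrite (bigD1_seq k) ?mem_index_iota ?iota_uniq //= eqxx.
by rewrite big1 ?addr0 // => i /negbTE ->.
Qed.

Lemma KPpadd R c k : KPp R -> KPp (R + c%:P%:P * pw P k).
Proof.
move=> [N1 [f ->]].
exists (maxn N1 k.+1), (fun i => (if (i < N1)%N then f i else 0) + (if i == k then c else 0)).
rewrite [RHS](eq_bigr (fun i => (if (i < N1)%N then (f i)%:P%:P * pw P i else 0)
   + (if i == k then c%:P%:P * pw P i else 0))); last first.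
  move=> i _ /=; case: ifP; case: ifP => _ _; rewrite ?addr0 ?add0r ?polyC0 ?mul0r ?addr0 ?add0r //.
  by rewrite (polyCD (f i) c) polyCD mulrDl.
rewrite big_split /= pad ?leq_maxl // single //.
by rewrite leq_max ltnSn orbT.
Qed.

Lemma C_KP Q : mul P Q = mul Q P -> KPp Q.
Proof.
move: {2}(size Q) (leqnn (size Q)) => N; elim: N Q => [|N IH] Q HN HQ.
  by move: HN; rewrite leqn0 size_poly_eq0 => /eqP ->; apply: KPp0.
case: (ltnP (size Q) N.+1) => Hlt; first by apply: IH.
have HQs : size Q = N.+1 by apply/eqP; rewrite eqn_leq HN Hlt.
have /divnK Ek := deg_div _ _ HQs HQ.
set k := (N %/ n)%N in Ek.
have HPk : size (pw P k) = N.+1 by rewrite (size_pow _ _ k P_deg) Ek.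
have CPk := Cpow _ k (erefl (mul P P)).
have E1 := lead_rel _ _ HQs HQ.
have E2 := lead_rel _ _ HPk CPk.
have pn0 : P`_n != 0 by apply: lastcoef_neq0.
have n0 : (0 < n)%N by apply: prime_gt0.
have E3 : iter n sigma (pw P k)`_N * Q`_N = iter n sigma Q`_N * (pw P k)`_N.
  apply: (mulfI pn0); rewrite !mulrA E1 E2; ring.
have [c Hc] := uniq_lead _ _ _ n0 (lastcoef_neq0 _ _ _ HPk) (lastcoef_neq0 _ _ _ HQs) E3.
set R := Q - c%:P%:P * pw P k.
have CR : mul P R = mul R P.
  by rewrite /R omulBr omulBl omulCr (omulCMl c%:P) HQ CPk.
have SR : (size R <= N)%N.
  apply/leq_sizeP => j; rewrite leq_eqVlt => /orP[/eqP <-|Hj].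
    by rewrite /R coefB (coefCM c%:P) Hc subrr.
  by rewrite /R coefB (coefCM c%:P) !nth_default ?mulr0 ?subr0 ?HQs ?HPk.
have [M [f Hf]] := IH R SR CR.
have -> : Q = R + c%:P%:P * pw P k by rewrite /R subrK.
by apply: KPpadd; exists M, f.
Qed.

Lemma KP_C Q : KPp Q -> mul P Q = mul Q P.
Proof.
move=> [N [f ->]]; rewrite omulsumr omulsuml; apply: eq_bigr => i _.
by rewrite omulCr (omulCMl (f i)%:P) Cpow.
Qed.

Lemma KP_equiv Q : KPp Q <-> ore_KP sigma delta P Q.
Proof.
split.
  move=> [N [f ->]]; exists (mkseq f N); rewrite size_mkseq.
  by apply: eq_big_nat => i /andP[_ Hi]; rewrite nth_mkseq.
by move=> [c ->]; exists (size c), (fun i => c`_i).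
Qed.

Lemma main Q : ore_centralizer sigma delta P Q <-> ore_KP sigma delta P Q.
Proof.
rewrite -KP_equiv /ore_centralizer; split; [exact: C_KP | exact: KP_C].
Qed.

End Ore.


Theorem proposition5p3 (K : fieldType)
  (sigma : {rmorphism {poly K} -> {poly K}})
  (sigmaK : forall c : K, sigma c%:P = c%:P)
  (sigma_deg : (2 < size (sigma 'X))%N)
  (delta : {poly K} -> {poly K})
  (delta_lin : forall (c : K) (a b : {poly K}), delta (c *: a + b) = c *: delta a + delta b)
  (delta_der : forall a b : {poly K}, delta (a * b) = sigma a * delta b + delta a * b)
  (P : {poly {poly K}}) (n : nat)
  (n_prime : prime n)
  (P_deg : size P = n.+1) :
  let rho := (size (lead_coef P)).-1 in
  let s := (size (sigma 'X)).-1 in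
  ~~ ((\sum_(i < n) s ^ i)%N %| rho)%N ->
  forall Q : {poly {poly K}},
    ore_centralizer sigma delta P Q <-> ore_KP sigma delta P Q.
Proof.
move=> rho s Hnd Q.
exact (@main K sigma sigmaK delta delta_lin delta_der sigma_deg P n n_prime P_deg Hnd Q).
Qed.
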